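(* Let $\Omega$ be an infinite set, $A$ a partition of $\Omega$, $S=\mathrm{Sym}(\Omega)$, $G=S_{(A)}$, and $\kappa$ an infinite regular cardinal with $\kappa\le|\Omega|$. Then: (a) if some member of $A$ has cardinality $\ge\kappa$, there is no $\kappa$-uncrowded generalized metric on $\Omega$ with respect to which all members of $G$ are bounded; (b) if all members of $A$ have cardinality $<\kappa$ but there is no common bound $\lambda<\kappa$ for these cardinalities, then there is a $\kappa$-uncrowded generalized metric on $\Omega$ with respect to which all elements of $G$ are bounded, but no uniformly $\kappa$-uncrowded generalized metric with this property; (c) if all members of $A$ have cardinality $\le\lambda$ for some $\lambda<\kappa$, then there is a uniformly $\kappa$-uncrowded generalized metric with respect to which all elements of $G$ are bounded. Consequently, for partitions $A,B$ of $\Omega$ falling under distinct cases among (a), (b), (c), $S_{(A)}\not\approx_\kappa S_{(B)}$; more precisely, if $A$ falls under a later case than $B$, then $S_{(B)}\not\preccurlyeq_\kappa S_{(A)}$.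
   Context: $\mathrm{Sym}(\Omega)$ is the group of all permutations of $\Omega$, acting on the right. For a partition $A$ of $\Omega$ (a set of disjoint nonempty subsets with union $\Omega$), $S_{(A)}=\{f\in S:\Sigma f=\Sigma\ \forall\Sigma\in A\}$. Let $P=\{r\in\mathbb R:r\ge0\}\cup\{\infty\}$. A generalized metric on $\Omega$ is $d:\Omega\times\Omega\to P$ satisfying the usual metric axioms. $B_d(\alpha,r)=\{\beta:d(\alpha,\beta)<r\}$. $d$ is $\kappa$-uncrowded if $|B_d(\alpha,r)|<\kappa$ for all $\alpha$ and all $r<\infty$; uniformly $\kappa$-uncrowded if for every $r<\infty$ there is $\lambda<\kappa$ with $|B_d(\alpha,r)|\le\lambda$ for all $\alpha$. For $g\in S$, $\|g\|_d=\sup_\alpha d(\alpha,\alpha g)$; $g$ is bounded if $\|g\|_d<\infty$. For subgroups $G_1,G_2\le S$, $G_1\preccurlyeq_\kappa G_2$ means there is $U\subseteq S$, $|U|<\kappa$, with $G_1\le\langle G_2\cup U\rangle$; $G_1\approx_\kappa G_2$ means both directions hold. *)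

(* Defs.v *)
From HB Require Import structures.
From mathcomp Require Import all_boot all_order all_algebra.
From mathcomp Require Import boolp classical_sets functions cardinality reals ereal.
Set Implicit Arguments. Unset Strict Implicit. Unset Printing Implicit Defensive.
Import Order.TTheory GRing.Theory Num.Theory.
Local Open Scope classical_set_scope.
Local Open Scope card_scope.

Definition card_lt T U (A : set T) (B : set U) : Prop := (A #<= B) /\ ~ (B #<= A).

(* A cardinal kappa is represented by a type K with |K| = kappa. *)
Definition infinite_card (K : Type) : Prop := infinite_set [set: K].

Definition regular_card (K : Type) : Prop :=
  forall (I : Type) (F : I -> set K),
    card_lt [set: I] [set: K] -> (forall i, card_lt (F i) [set: K]) ->
    card_lt (\bigcup_i F i) [set: K].

Definition is_partition (Om : Type) (A : set (set Om)) : Prop :=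
  (forall X, A X -> X !=set0) /\
  (forall X Y, A X -> A Y -> X `&` Y !=set0 -> X = Y) /\
  (\bigcup_(X in A) X = [set: Om]).

(* Sym(Omega), as a set of functions; alpha g is written g alpha *)
Definition Sym (Om : Type) : set (Om -> Om) := [set f | bijective f].

Definition stab (Om : Type) (A : set (set Om)) : set (Om -> Om) :=
  [set f | @Sym Om f /\ forall X, A X -> f @` X = X].

Definition is_subgroup (Om : Type) (H : set (Om -> Om)) : Prop :=
  H `<=` @Sym Om /\ H id /\
  (forall f g, H f -> H g -> H (g \o f)) /\
  (forall f, H f -> exists2 g, H g & (g \o f = id /\ f \o g = id)).

Definition gen (Om : Type) (X : set (Om -> Om)) : set (Om -> Om) :=
  [set f | forall H, is_subgroup H -> X `<=` H -> H f].

Definition preceq_k (K Om : Type) (G1 G2 : set (Om -> Om)) : Prop :=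
  exists2 U : set (Om -> Om), U `<=` @Sym Om /\ card_lt U [set: K] &
    G1 `<=` gen (G2 `|` U).

Definition approx_k (K Om : Type) (G1 G2 : set (Om -> Om)) : Prop :=
  preceq_k K G1 G2 /\ preceq_k K G2 G1.

(* generalized metrics with values in P = [0, +oo] inside \bar R *)
Section Metric.
Context {R : realType}.
Local Open Scope ereal_scope.

Definition gen_metric (Om : Type) (d : Om -> Om -> \bar R) : Prop :=
  (forall a b, 0 <= d a b) /\
  (forall a b, d a b = 0 <-> a = b) /\
  (forall a b, d a b = d b a) /\
  (forall a b c, d a c <= d a b + d b c).

Definition ball_d (Om : Type) (d : Om -> Om -> \bar R) (a : Om) (r : R) : set Om :=
  [set b | d a b < r%:E].

Definition uncrowded (K Om : Type) (d : Om -> Om -> \bar R) : Prop :=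
  forall a (r : R), (0 <= r)%R -> card_lt (ball_d d a r) [set: K].

(* "for every r < oo there is lambda < kappa bounding all balls";
   a cardinal lambda < kappa is represented by a subset L of K with |L| < |K| *)
Definition unif_uncrowded (K Om : Type) (d : Om -> Om -> \bar R) : Prop :=
  forall r : R, (0 <= r)%R ->
    exists2 L : set K, card_lt L [set: K] & forall a, ball_d d a r #<= L.

Definition dnorm (Om : Type) (d : Om -> Om -> \bar R) (g : Om -> Om) : \bar R :=
  ereal_sup (range (fun a => d a (g a))).

Definition bounded_d (Om : Type) (d : Om -> Om -> \bar R) (g : Om -> Om) : Prop :=
  dnorm d g < +oo.

End Metric.

Definition case_a (K Om : Type) (A : set (set Om)) : Prop :=
  exists2 X, A X & [set: K] #<= X.
Definition case_b (K Om : Type) (A : set (set Om)) : Prop :=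
  (forall X, A X -> card_lt X [set: K]) /\
  ~ (exists2 L : set K, card_lt L [set: K] & forall X, A X -> X #<= L).
Definition case_c (K Om : Type) (A : set (set Om)) : Prop :=
  exists2 L : set K, card_lt L [set: K] & forall X, A X -> X #<= L.

(* Main.v *)
Require Import Defs.
From mathcomp Require Import all_boot all_order all_algebra.
From mathcomp Require Import boolp classical_sets functions cardinality reals ereal.
Set Implicit Arguments. Unset Strict Implicit. Unset Printing Implicit Defensive.
Import Order.TTheory GRing.Theory Num.Theory.
Local Open Scope classical_set_scope.
Local Open Scope card_scope.

Lemma inj_le T U (A : set T) (B : set U) (f : T -> U) :
  (forall x, A x -> B (f x)) -> (forall x y, A x -> A y -> f x = f y -> x = y) ->
  A #<= B.
Proof.
move=> fAB finj; apply/card_subP; exists (f @` A).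
  apply: inj_card_eq => x y /set_mem Ax /set_mem Ay; exact: finj.
by move=> _ [x Ax <-]; apply: fAB.
Qed.

Lemma le_inj T U (A : set T) (B : set U) (a0 : T) : A a0 -> A #<= B ->
  exists f : T -> U, (forall x, A x -> B (f x)) /\
    (forall x y, A x -> A y -> f x = f y -> x = y).
Proof.
move=> Aa0 /card_leP[f].
pose g (x : T) : U := match pselect (A x) with
  | left h => val (f (exist _ x (mem_set h)))
  | right _ => val (f (exist _ a0 (mem_set Aa0))) end.
exists g; split.
  move=> x Ax; rewrite /g; case: pselect => // h.
  exact: set_valP.
move=> x y Ax Ay; rewrite /g; case: pselect => // hx; case: pselect => // hy.
move=> /val_inj /(@inj _ _ _ f) => /(_ (mem_set I) (mem_set I)).
by move=> [].
Qed.

Lemma card_total T U (X : set T) (Y : set U) : X #<= Y \/ Y #<= X.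
Proof.
pose P := [set G : set (T * U) | (forall p, G p -> X p.1 /\ Y p.2) /\
  (forall p q, G p -> G q -> p.1 = q.1 -> p.2 = q.2) /\
  (forall p q, G p -> G q -> p.2 = q.2 -> p.1 = q.1)].
have [G [PG Gmax]] : exists A, P A /\ forall B, A `<` B -> ~ P B.
  apply: Zorn_bigcup => F FP Ftot; split; [|split].
  - by move=> p [G FG Gp]; have [+ _] := FP _ FG; apply.
  - move=> p q [G1 FG1 G1p] [G2 FG2 G2q].
    have [h|h] := Ftot _ _ FG1 FG2.
      by have [_ [+ _]] := FP _ FG2; apply => //; apply: h.
    by have [_ [+ _]] := FP _ FG1; apply => //; apply: h.
  - move=> p q [G1 FG1 G1p] [G2 FG2 G2q].
    have [h|h] := Ftot _ _ FG1 FG2.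
      by have [_ [_ +]] := FP _ FG2; apply => //; apply: h.
    by have [_ [_ +]] := FP _ FG1; apply => //; apply: h.
have [GXY [Gf Gi]] := PG.
have [dom|/existsNP[x0 /not_implyP[Xx0 /forallNP nx0]]] := pselect (forall x, X x -> exists y, G (x, y)); last first.
  have [ran|/existsNP[y0 /not_implyP[Yy0 /forallNP ny0]]] := pselect (forall y, Y y -> exists x, G (x, y)); last first.
    exfalso; apply: (Gmax (G `|` [set (x0, y0)])).
      split; first by move=> p Gp; left.
      move=> /(_ (x0, y0) (or_intror erefl)) Gxy; exact: (nx0 y0).
    split; [|split].
    - by move=> p [/GXY//|-> /=].
    - move=> p q [Gp|->] [Gq|->] //= e; first exact: Gf.
      + by exfalso; apply: (nx0 p.2); rewrite -e -surjective_pairing.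
      + by exfalso; apply: (nx0 q.2); rewrite e -surjective_pairing.
    - move=> p q [Gp|->] [Gq|->] //= e; first exact: Gi.
      + by exfalso; apply: (ny0 p.1); rewrite -e -surjective_pairing.
      + by exfalso; apply: (ny0 q.1); rewrite e -surjective_pairing.
  right.
  have [->|/set0P[y1 Yy1]] := eqVneq Y set0; first exact: card_ge0.
  have [x1 _] := ran _ Yy1.
  pose f y := match pselect (exists x, G (x, y)) with
    | left h => projT1 (cid h) | right _ => x1 end.
  have fG y : Y y -> G (f y, y).
    move=> Yy; rewrite /f; case: pselect => [h|h]; last by exfalso; apply: h; apply: ran.
    exact: (projT2 (cid h)).
  apply: (@inj_le _ _ _ _ f).
    by move=> y Yy; have [] := GXY _ (fG _ Yy).
  by move=> y y' Yy Yy' e; exact: (Gf _ _ (fG _ Yy) (fG _ Yy') e).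
left.
have [->|/set0P[x1 Xx1]] := eqVneq X set0; first exact: card_ge0.
have [y1 _] := dom _ Xx1.
pose f x := match pselect (exists y, G (x, y)) with
  | left h => projT1 (cid h) | right _ => y1 end.
have fG x : X x -> G (x, f x).
  move=> Xx; rewrite /f; case: pselect => [h|h]; last by exfalso; apply: h; apply: dom.
  exact: (projT2 (cid h)).
apply: (@inj_le _ _ _ _ f).
  by move=> x Xx; have [] := GXY _ (fG _ Xx).
by move=> x x' Xx Xx' e; exact: (Gi _ _ (fG _ Xx) (fG _ Xx') e).
Qed.

Lemma card_lt_le T U V (X : set T) (Y : set U) (B : set V) :
  X #<= Y -> card_lt Y B -> card_lt X B.
Proof.
move=> XY [YB nBY]; split; first exact: card_le_trans XY YB.
by move=> BX; apply: nBY; apply: card_le_trans BX XY.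
Qed.

Lemma card_lt_sub T V (X Y : set T) (B : set V) :
  X `<=` Y -> card_lt Y B -> card_lt X B.
Proof. by move=> /subset_card_le; apply: card_lt_le. Qed.

Section Reg.
Variable K : Type.
Hypothesis Kinf : infinite_card K.
Hypothesis Kreg : regular_card K.
Let Kinf' : ~ finite_set [set: K] := Kinf.

Lemma fin_lt T (F : set T) : finite_set F -> card_lt F [set: K].
Proof.
move=> Ffin; have nKF : ~ ([set: K] #<= F).
  by move=> KF; apply: Kinf'; apply: card_le_finite KF Ffin.
by split=> //; have [//|] := card_total F [set: K].
Qed.

Lemma union_lt T (I : Type) (F : I -> set T) :
  card_lt [set: I] [set: K] -> (forall i, card_lt (F i) [set: K]) ->
  card_lt (\bigcup_i F i) [set: K].
Proof.
move=> IK FK.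
have nKU : ~ ([set: K] #<= \bigcup_i F i).
  move=> KU; have [k0 _] := infinite_setN0 Kinf'.
  have [h [hU hinj]] := le_inj (Logic.I : [set: K] k0) KU.
  pose G i := h @^-1` (F i).
  have GK i : card_lt (G i) [set: K].
    have GF : G i #<= F i.
      by apply: (@inj_le _ _ _ _ h) => // x y _ _; apply: hinj.
    split; first exact: card_leT.
    by move=> KG; apply: (proj2 (FK i)); apply: card_le_trans KG GF.
  have := Kreg IK GK; rewrite /card_lt => -[_]; apply.
  apply: subset_card_le => k _; have [i _ Fi] := hU k Logic.I.
  by exists i.
by split=> //; have [//|] := card_total (\bigcup_i F i) [set: K].
Qed.

Lemma union2_lt T (X Y : set T) :
  card_lt X [set: K] -> card_lt Y [set: K] -> card_lt (X `|` Y) [set: K].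
Proof.
move=> XK YK.
have -> : X `|` Y = \bigcup_(b : bool) (if b then X else Y).
  apply/seteqP; split.
    by move=> x [Xx|Yx]; [exists true|exists false].
  by move=> x [[] _ h]; [left|right].
apply: union_lt; first exact/fin_lt/finite_finset.
by case.
Qed.

Lemma union_set_lt T U (I : set U) (F : U -> set T) :
  card_lt I [set: K] -> (forall i, I i -> card_lt (F i) [set: K]) ->
  card_lt (\bigcup_(i in I) F i) [set: K].
Proof.
move=> IK FK; rewrite bigcup_set_type; apply: union_lt.
  by apply: card_lt_le IK; have /card_eqPle[] := card_setT I.
by move=> i; apply: FK; apply: set_valP.
Qed.

End Reg.

Lemma rep_lt K T (X : set T) : card_lt X [set: K] ->
  exists2 M : set K, card_lt M [set: K] & X #<= M.
Proof.
move=> [XK nKX]; have /card_subP[C CX _] := XK.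
have /card_eqPle[CX1 CX2] := CX.
by exists C => //; apply: card_lt_le CX1 _.
Qed.

Lemma prod_le T V K1 K2 (I : set T) (F : T -> set V) (L1 : set K1) (L2 : set K2) :
  I #<= L1 -> (forall i, I i -> F i #<= L2) ->
  \bigcup_(i in I) F i #<= L1 `*` L2.
Proof.
move=> IL FL.
have [->|/set0P[v0 [i0 Ii0 Fv0]]] := eqVneq (\bigcup_(i in I) F i) set0.
  exact: card_ge0.
have [iota [iL iinj]] := le_inj Ii0 IL.
have [j0 _] : exists j0 : K2, True.
  have [f [+ _]] := le_inj Fv0 (FL _ Ii0).
  by move=> /(_ _ Fv0) h; exists (f v0).
have : forall i, exists f : V -> K2, forall v, I i -> F i v ->
    (forall x, F i x -> L2 (f x)) /\ (forall x y, F i x -> F i y -> f x = f y -> x = y).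
  move=> i; have [[v Fiv]|nF] := pselect (exists v, F i v); last first.
    by exists (fun _ => j0) => v _ Fv; exfalso; apply: nF; exists v.
  have [Ii|nIi] := pselect (I i); last by exists (fun _ => j0).
  by have [f fP] := le_inj Fiv (FL _ Ii); exists f.
move=> /choice[J JP].
have : forall v, exists i, (\bigcup_(i in I) F i) v -> I i /\ F i v.
  move=> v; have [[i Ii Fiv]|nv] := pselect ((\bigcup_(i in I) F i) v).
    by exists i.
  by exists i0.
move=> /choice[sel selP].
apply: (@inj_le _ _ _ _ (fun v => (iota (sel v), J (sel v) v))).
  move=> v Uv; have [Is Fs] := selP _ Uv; split => /=; first exact: iL.
  by have [+ _] := JP _ _ Is Fs; apply.
move=> v w Uv Uw [e1 e2].
have [Isv Fsv] := selP _ Uv; have [Isw Fsw] := selP _ Uw.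
have es := iinj _ _ Isv Isw e1.
rewrite -es in Fsw e2.
by have [_ +] := JP _ _ Isv Fsv; apply.
Qed.

Section Reg2.
Variable K : Type.
Hypothesis Kinf : infinite_card K.
Hypothesis Kreg : regular_card K.

Lemma setX_lt (L1 L2 : set K) : card_lt L1 [set: K] -> card_lt L2 [set: K] ->
  card_lt (L1 `*` L2) [set: K].
Proof.
move=> L1K L2K.
apply: (@card_lt_sub _ _ _ (\bigcup_(i in L1) ([set i] `*` L2))).
  by move=> [x y] [/= Lx Ly]; exists x => //.
apply: union_set_lt => // i _; apply: card_lt_le L2K.
apply: (@inj_le _ _ _ _ snd); first by move=> [x y] [].
by move=> [x y] [x' y'] [/= -> _] [/= -> _] /= ->.
Qed.

Lemma prod_bound (L1 L2 : set K) : card_lt L1 [set: K] -> card_lt L2 [set: K] ->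
  exists2 L : set K, card_lt L [set: K] & forall T V (I : set T) (F : T -> set V),
    I #<= L1 -> (forall i, I i -> F i #<= L2) -> \bigcup_(i in I) F i #<= L.
Proof.
move=> L1K L2K; have [M MK XM] := rep_lt (setX_lt L1K L2K).
exists M => // T V I F IL FL.
exact: card_le_trans (prod_le IL FL) XM.
Qed.

Lemma sum_bound (L1 L2 : set K) : card_lt L1 [set: K] -> card_lt L2 [set: K] ->
  exists2 L : set K, card_lt L [set: K] & forall T (X Y : set T),
    X #<= L1 -> Y #<= L2 -> X `|` Y #<= L.
Proof.
move=> L1K L2K.
have [LB LBK BLB] := rep_lt (fin_lt Kinf (@finite_finset bool [set: bool])).
have L12K := union2_lt Kinf Kreg L1K L2K.
have [L LK LP] := prod_bound LBK L12K.
exists L => // T X Y XL YL.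
have -> : X `|` Y = \bigcup_(b in [set: bool]) (if b then X else Y).
  apply/seteqP; split.
    by move=> x [Xx|Yx]; [exists true|exists false].
  by move=> x [[] _ h]; [left|right].
apply: LP => // -[] _.
  by apply: card_le_trans XL _; apply: subset_card_le => x; left.
by apply: card_le_trans YL _; apply: subset_card_le => x; right.
Qed.

End Reg2.

Section Bnd.
Variables (R : realType) (Om : Type) (d : Om -> Om -> \bar R).
Local Open Scope ereal_scope.

Lemma dnorm_le g M : (forall a, d a (g a) <= M) -> dnorm d g <= M.
Proof. by move=> h; apply: ge_ereal_sup => _ [a _ <-]. Qed.

Lemma dnorm_ge g a : d a (g a) <= dnorm d g.
Proof. by apply: ereal_sup_ubound; exists a. Qed.

Hypothesis dm : gen_metric d.

Lemma bounded_subgroup : is_subgroup [set f | Sym f /\ bounded_d d f].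
Proof.
have [d0 [dE [dC dT]]] := dm.
split; first by move=> f [].
split.
  split; first by exists id.
  rewrite /bounded_d; apply: (@le_lt_trans _ _ 0); last exact: ltey.
  by apply: dnorm_le => a; rewrite (proj2 (dE a a) erefl).
split.
  move=> f g [fS fb] [gS gb]; split; first exact: bij_comp.
  rewrite /bounded_d; apply: (@le_lt_trans _ _ (dnorm d f + dnorm d g)).
    apply: dnorm_le => a /=; apply: le_trans (dT a (f a) _) _.
    by apply: leeD; [apply: dnorm_ge|apply: (dnorm_ge g (f a))].
  exact: lte_add_pinfty.
move=> f [[g fg gf] fb]; exists g; last first.
  by split; apply/funext => x /=; [rewrite fg|rewrite gf].
split; first by exists f.
rewrite /bounded_d; apply: le_lt_trans fb; apply: dnorm_le => a.
by rewrite -{1}(gf a) dC; apply: dnorm_ge.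
Qed.

Lemma gen_sub (X : set (Om -> Om)) :
  X `<=` [set f | Sym f /\ bounded_d d f] -> gen X `<=` [set f | Sym f /\ bounded_d d f].
Proof. by move=> XH f; apply; [exact: bounded_subgroup|]. Qed.

End Bnd.

Section Graph.
Variables (R : realType) (Om : Type) (A : set (set Om)) (U : set (Om -> Om)).
Hypothesis Apart : is_partition A.

Definition E x y := (exists2 X, A X & X x /\ X y) \/
  (exists2 u, U u & y = u x) \/ (exists2 u, U u & x = u y).

Lemma E_refl x : E x x.
Proof.
have [_ [_ cov]] := Apart.
have : [set: Om] x by [].
by rewrite -cov => -[X AX Xx]; left; exists X.
Qed.

Lemma E_sym x y : E x y -> E y x.
Proof.
move=> [[X AX [Xx Xy]]|[[u Uu e]|[u Uu e]]].
- by left; exists X.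
- by right; right; exists u.
- by right; left; exists u.
Qed.

Fixpoint reach n x y := match n with 0 => x = y
  | n'.+1 => exists2 z, reach n' x z & E z y end.

Lemma reachS n x y : reach n x y -> reach n.+1 x y.
Proof. by move=> h; exists y => //; apply: E_refl. Qed.

Lemma reach_le m n x y : (m <= n)%N -> reach m x y -> reach n x y.
Proof.
move=> /subnK <-; elim: (n - m)%N => // k IH h.
by rewrite addSn; apply: reachS; apply: IH.
Qed.

Lemma reach_add m n x y z : reach m x y -> reach n y z -> reach (m + n) x z.
Proof.
elim: n z => [|n IH] z h1 /=; first by move=> <-; rewrite addn0.
by move=> [w h2 Ewz]; rewrite addnS; exists w => //; apply: IH h2.
Qed.

Lemma reach_sym n x y : reach n x y -> reach n y x.
Proof.
elim: n x y => [|n IH] x y /=; first by move=> ->.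
move=> [z h Ezy]; have r1 : reach 1 y z by exists y => //; apply: E_sym.
by have := reach_add r1 (IH _ _ h); rewrite add1n.
Qed.

Local Open Scope ereal_scope.

Definition gdist x y : \bar R :=
  match pselect (exists n, `[< reach n x y >]) with
  | left h => ((ex_minn h)%:R)%:E | right _ => +oo end.

Lemma gdist_spec x y :
  (gdist x y = +oo /\ forall n, ~ reach n x y) \/
  (exists m, [/\ gdist x y = (m%:R)%:E, reach m x y & forall n, reach n x y -> (m <= n)%N]).
Proof.
rewrite /gdist; case: pselect => [h|h]; last first.
  by left; split => // n rn; apply: h; exists n; apply/asboolP.
right; case: ex_minnP => m /asboolP rm mmin; exists m; split => // n rn.
by apply: mmin; apply/asboolP.
Qed.

Lemma gdist_le n x y : reach n x y -> gdist x y <= (n%:R)%:E.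
Proof.
move=> rn; have [[_ h]|[m [-> _ mmin]]] := gdist_spec x y.
  by exfalso; apply: h rn.
by rewrite lee_fin ler_nat; apply: mmin.
Qed.

Lemma gdist_metric : gen_metric gdist.
Proof.
split; [|split; [|split]].
- move=> a b; have [[-> _]|[m [-> _ _]]] := gdist_spec a b => //.
- move=> a b; split.
    have [[-> _]|[m [-> rm _]]] := gdist_spec a b => // -[].
    by move/eqP; rewrite pnatr_eq0 => /eqP em; move: rm; rewrite em.
  move=> ->; apply/eqP; rewrite eq_le; apply/andP; split.
    exact: (gdist_le (n:=0)).
  by have [[-> _]|[m [-> _ _]]] := gdist_spec b b => //; rewrite (_ : 0 = 0%:E)// lee_fin.
- have le a b : gdist a b <= gdist b a.
    have [[-> _]|[m [-> rm _]]] := gdist_spec b a; first exact: leey.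
    by apply: gdist_le; apply: reach_sym.
  by move=> a b; apply/eqP; rewrite eq_le !le.
- move=> a b c.
  have [[-> _]|[m [-> rm _]]] := gdist_spec a b.
    have [[-> _]|[n [-> rn _]]] := gdist_spec b c; first by rewrite leey.
    by rewrite addye ?leey.
  have [[-> _]|[n [-> rn _]]] := gdist_spec b c; first by rewrite addey ?leey.
  by rewrite -EFinD -natrD; apply: gdist_le; apply: reach_add rm rn.
Qed.

Lemma ball_reach a (r : R) n : (r <= n%:R)%R -> ball_d gdist a r `<=` reach n a.
Proof.
move=> rn b; rewrite /ball_d /=.
have [[-> _]|[m [-> rm _]]] := gdist_spec a b; first by rewrite ltNge leey.
rewrite lte_fin => mr; apply: reach_le rm.
by apply: ltnW; rewrite -(ltr_nat R); apply: lt_le_trans rn.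
Qed.

End Graph.

Section GraphCard.
Variables (R : realType) (Om K : Type) (A : set (set Om)) (U : set (Om -> Om)).
Hypothesis Apart : is_partition A.
Hypothesis Kinf : infinite_card K.
Hypothesis Kreg : regular_card K.
Hypothesis Ablk : forall X, A X -> card_lt X [set: K].
Hypothesis USym : U `<=` @Sym Om.
Hypothesis UK : card_lt U [set: K].

Definition pre (z : Om) (u : Om -> Om) : Om :=
  match pselect (exists y, u y = z) with left h => projT1 (cid h) | right _ => z end.

Lemma pre_eq z u y : U u -> z = u y -> pre z u = y.
Proof.
move=> Uu zy; rewrite /pre; case: pselect => [h|h]; last by exfalso; apply: h; exists y.
have : bijective u := USym Uu.
case=> v uv vu.
have := projT2 (cid h) => /= e; apply: (can_inj uv); rewrite e zy.
by [].
Qed.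

Lemma E_sub z : exists2 X, A X &
  E A U z `<=` X `|` ((fun u => u z) @` U `|` pre z @` U).
Proof.
have [_ [Adis cov]] := Apart.
have : [set: Om] z by [].
rewrite -cov => -[X AX Xz]; exists X => // y [[Y AY [Yz Yy]]|[[u Uu e]|[u Uu e]]].
- left; have -> : X = Y by apply: Adis => //; exists z.
  exact: Yy.
- by right; left; exists u.
- by right; right; exists u => //; apply: pre_eq.
Qed.

Lemma img_lt (f : (Om -> Om) -> Om) : card_lt (f @` U) [set: K].
Proof. exact: card_lt_le (card_image_le f U) UK. Qed.

Lemma E_lt z : card_lt (E A U z) [set: K].
Proof.
have [X AX sub] := E_sub z.
apply: card_lt_sub sub _; apply: union2_lt => //; first exact: Ablk.
by apply: union2_lt => //; apply: img_lt.
Qed.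

Lemma reach_succ_sub n a :
  reach A U n.+1 a `<=` \bigcup_(z in reach A U n a) E A U z.
Proof. by move=> b [z rz Ezb]; exists z. Qed.

Lemma reach_lt n a : card_lt (reach A U n a) [set: K].
Proof.
elim: n => [|n IH].
  apply: (card_lt_sub (Y := [set a])); first by move=> b /= ->.
  by apply: fin_lt => //; apply: finite_set1.
have h := reach_succ_sub (n:=n) (a:=a); apply: (card_lt_sub h).
by apply: union_set_lt => // z _; apply: E_lt.
Qed.

Lemma E_unif (L : set K) : card_lt L [set: K] -> (forall X, A X -> X #<= L) ->
  exists2 L' : set K, card_lt L' [set: K] & forall z, E A U z #<= L'.
Proof.
move=> LK AL.
have [M MK UM] := rep_lt UK.
have [M2 M2K M2P] := sum_bound Kinf Kreg MK MK.
have [L3 L3K L3P] := sum_bound Kinf Kreg LK M2K.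
exists L3 => // z; have [X AX sub] := E_sub z.
apply: card_le_trans (subset_card_le sub) _; apply: L3P; first exact: AL.
by apply: M2P; apply: card_le_trans (card_image_le _ _) UM.
Qed.

Lemma reach_unif (L : set K) : card_lt L [set: K] -> (forall X, A X -> X #<= L) ->
  forall n, exists2 Ln : set K, card_lt Ln [set: K] & forall a, reach A U n a #<= Ln.
Proof.
move=> LK AL; have [L' L'K L'P] := E_unif LK AL.
elim=> [|n [Ln LnK LnP]].
  have [M MK tM] := rep_lt (fin_lt Kinf (finite_set1 tt)).
  exists M => // a; apply: card_le_trans tM.
  apply: (@inj_le _ _ _ _ (fun _ => tt)) => //.
  by move=> x y /= <- <-.
have [L2 L2K L2P] := prod_bound Kinf Kreg LnK L'K.
exists L2 => // a; apply: card_le_trans (subset_card_le (reach_succ_sub (n:=n) (a:=a))) _.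
by apply: L2P => // z _.
Qed.

Local Open Scope ereal_scope.

Lemma graph_good :
  [/\ gen_metric (gdist R A U), uncrowded K (gdist R A U),
      (forall g, stab A g \/ U g -> bounded_d (gdist R A U) g) &
      (case_c K A -> unif_uncrowded K (gdist R A U))].
Proof.
have nat_ge (r : R) : (0 <= r)%R -> exists n, (r <= n%:R)%R.
  by move=> r0; exists (Num.Def.archi_bound r); apply/ltW/archi_boundP.
split.
- exact: gdist_metric.
- move=> a r r0; have [n rn] := nat_ge _ r0.
  by apply: card_lt_sub (ball_reach (U:=U) (a:=a) Apart rn) _; apply: reach_lt.
- move=> g gSU; rewrite /bounded_d; apply: (@le_lt_trans _ _ (1%:R)%:E); last exact: ltey.
  apply: dnorm_le => a; apply: gdist_le; exists a => //.
  case: gSU => [[_ gA]|Ug]; last by right; left; exists g.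
  have [_ [_ cov]] := Apart.
  have : [set: Om] a by [].
  rewrite -cov => -[X AX Xa]; left; exists X => //; split => //.
  by rewrite -(gA _ AX); exists a.
- move=> [L LK AL] r r0; have [n rn] := nat_ge _ r0.
  have [Ln LnK LnP] := reach_unif LK AL n.
  exists Ln => // a; apply: card_le_trans (LnP a).
  exact/subset_card_le/(ball_reach (U:=U) (a:=a) Apart rn).
Qed.

End GraphCard.

Fixpoint lin T (x : T) (s : seq T) : Prop :=
  if s is y :: s' then y = x \/ lin x s' else False.

Definition Fof Om (s : seq (Om * Om)) : set Om :=
  [set x | exists2 p, lin p s & (x = p.1 \/ x = p.2)].

Fixpoint seqp Om (ch : set Om * nat -> Om * Om) n : seq (Om * Om) :=
  if n is n'.+1 then ch (Fof (seqp ch n'), n') :: seqp ch n' else [::].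

Lemma Fof_finite Om (s : seq (Om * Om)) : finite_set (Fof s).
Proof.
elim: s => [|p s IH].
  by apply: (sub_finite_set (B := set0)) => [x [p []]|]; last exact: finite_set0.
apply: (sub_finite_set (B := ([set p.1] `|` [set p.2]) `|` Fof s)).
  move=> x [q [<-|qs] [->|->]].
  - by left; left.
  - by left; right.
  - by right; exists q => //; left.
  - by right; exists q => //; right.
by rewrite !finite_setU; split => //; split; apply: finite_set1.
Qed.

Lemma seqp_in Om ch i j : (i < j)%N ->
  lin (ch (Fof (seqp ch i), i)) (@seqp Om ch j).
Proof.
elim: j => // j IH; rewrite ltnS leq_eqVlt => /orP[/eqP ->|lt]; first by left.
by right; apply: IH.
Qed.

Section Neg.
Variables (R : realType) (Om : Type) (A : set (set Om)) (d : Om -> Om -> \bar R).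
Hypothesis Apart : is_partition A.
Hypothesis dm : gen_metric d.
Local Open Scope ereal_scope.

Lemma swap_unbounded (al be : nat -> Om) :
  (forall i j, al i = al j -> i = j) -> (forall i j, be i = be j -> i = j) ->
  (forall i j, al i <> be j) ->
  (forall n, exists2 X, A X & X (al n) /\ X (be n)) ->
  (forall n, (n%:R)%:E <= d (al n) (be n)) ->
  exists2 g, stab A g & ~ bounded_d d g.
Proof.
move=> ali bei abd blk dn.
pose g x := match pselect (exists n, x = al n) with
  | left h => be (projT1 (cid h))
  | right _ => match pselect (exists n, x = be n) with
     | left h => al (projT1 (cid h)) | right _ => x end end.
have ga n : g (al n) = be n.
  rewrite /g; case: pselect => [h|h]; last by exfalso; apply: h; exists n.
  by have := projT2 (cid h) => /= /ali e; rewrite -e.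
have gb n : g (be n) = al n.
  rewrite /g; case: pselect => [[m /esym /abd //]|_].
  case: pselect => [h|h]; last by exfalso; apply: h; exists n.
  by have := projT2 (cid h) => /= /bei e; rewrite -e.
have go x : ~ (exists n, x = al n) -> ~ (exists n, x = be n) -> g x = x.
  by move=> h1 h2; rewrite /g; case: pselect => // _; case: pselect.
have gg x : g (g x) = x.
  have [[n ->]|h1] := pselect (exists n, x = al n); first by rewrite ga gb.
  have [[n ->]|h2] := pselect (exists n, x = be n); first by rewrite gb ga.
  by rewrite !go.
have [_ [Adis _]] := Apart.
have gX X x : A X -> X x -> X (g x).
  move=> AX Xx.
  have [[n e]|h1] := pselect (exists n, x = al n).
    have [Y AY [Ya Yb]] := blk n; rewrite e ga.
    have -> : X = Y by apply: Adis => //; exists x; split => //; rewrite e.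
    exact: Yb.
  have [[n e]|h2] := pselect (exists n, x = be n).
    have [Y AY [Ya Yb]] := blk n; rewrite e gb.
    have -> : X = Y by apply: Adis => //; exists x; split => //; rewrite e.
    exact: Ya.
  by rewrite go.
exists g.
  split; first by exists g.
  move=> X AX; apply/seteqP; split; first by move=> _ [x Xx <-]; apply: gX.
  by move=> x Xx; exists (g x); [apply: gX|apply: gg].
rewrite /bounded_d => lt.
have hD n : (n%:R)%:E <= dnorm d g.
  apply: (le_trans (dn n)); rewrite -ga; exact: dnorm_ge.
move: lt hD; case: (dnorm d g) => [r _ hD|_ hD|_ hD] //.
  have := hD (Num.Def.archi_bound `|r|%R); rewrite lee_fin => h.
  have := archi_boundP (normr_ge0 r); rewrite ltNge => /negP; apply.
  exact: (le_trans h (ler_norm r)).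
by have := hD 0%N.
Qed.

Definition goodpair (F : set Om) (n : nat) (p : Om * Om) :=
  [/\ ~ F p.1, ~ F p.2, p.1 <> p.2, (exists2 X, A X & X p.1 /\ X p.2) &
      (n%:R)%:E <= d p.1 p.2].

Lemma pairs_unbounded :
  (forall F, finite_set F -> forall n, exists p, goodpair F n p) ->
  exists2 g, stab A g & ~ bounded_d d g.
Proof.
move=> H.
have : forall Fn : set Om * nat, exists p, finite_set Fn.1 -> goodpair Fn.1 Fn.2 p.
  move=> [F n] /=; have [Ff|nF] := pselect (finite_set F).
    by have [p hp] := H F Ff n; exists p.
  by have [p _] := H set0 (finite_set0 _) 0%N; exists p => /nF.
move=> /choice[ch chP].
pose pr n := ch (Fof (seqp ch n), n).
have prP n : goodpair (Fof (seqp ch n)) n (pr n) by apply: (chP (_, _)); apply: Fof_finite.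
have inF i j : (i < j)%N -> Fof (seqp ch j) (pr i).1 /\ Fof (seqp ch j) (pr i).2.
  by move=> ij; split; exists (pr i) => //; [apply: seqp_in|left|apply: seqp_in|right].
have neq i j : (i < j)%N -> forall x, x = (pr i).1 \/ x = (pr i).2 ->
    x <> (pr j).1 /\ x <> (pr j).2.
  move=> ij x hx; have [h1 h2 _ _ _] := prP j; have [f1 f2] := inF _ _ ij.
  by split => e; [apply: h1|apply: h2]; rewrite -e; case: hx => ->.
apply: (@swap_unbounded (fun n => (pr n).1) (fun n => (pr n).2)).
- move=> i j /= e; apply/eqP; case: (ltngtP i j) => // ij; exfalso.
    by have [h _] := neq _ _ ij _ (or_introl erefl); apply: h.
  by have [h _] := neq _ _ ij _ (or_introl erefl); apply: h.
- move=> i j /= e; apply/eqP; case: (ltngtP i j) => // ij; exfalso.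
    by have [_ h] := neq _ _ ij _ (or_intror erefl); apply: h.
  by have [_ h] := neq _ _ ij _ (or_intror erefl); apply: h.
- move=> i j /= e; case: (ltngtP i j) => ij.
  + by have [_ h] := neq _ _ ij _ (or_introl erefl); apply: h.
  + by have [h _] := neq _ _ ij _ (or_intror erefl); apply: h.
  + by have [_ _ + _ _] := prP i; rewrite {2}ij.
- by move=> n; have [_ _ _ + _] := prP n.
- by move=> n; have [_ _ _ _ +] := prP n.
Qed.

Lemma finish_pair (F : set Om) (n : nat) X a b : A X -> X a -> X b -> ~ F a -> ~ F b ->
  ~ ball_d d a (n.+1%:R) b -> goodpair F n (a, b).
Proof.
move=> AX Xa Xb Fa Fb; rewrite /ball_d /= => /negP; rewrite -leNgt => h.
have [d0 [dE _]] := dm.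
split => //=.
- move=> e; move: h; rewrite e (proj2 (dE b b) erefl).
  by rewrite [X in _ <= X](_ : _ = 0%:E)// lee_fin leNgt ltr0Sn.
- by exists X.
- by apply: le_trans h; rewrite lee_fin ler_nat.
Qed.

Lemma negA K : infinite_card K -> regular_card K -> case_a K A -> uncrowded K d ->
  exists2 g, stab A g & ~ bounded_d d g.
Proof.
move=> Kinf Kreg [X AX KX] unc; apply: pairs_unbounded => F Ffin n.
have Xinf : ~ finite_set X by move=> Xf; apply: Kinf; apply: card_le_finite KX Xf.
have [a [Xa Fa]] : exists a, X a /\ ~ F a.
  apply: contra_notP Xinf => h; apply: sub_finite_set Ffin => a Xa.
  by apply: contra_notP h => Fa; exists a.
have SK : card_lt (F `|` ball_d d a (n.+1%:R)) [set: K].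
  apply: union2_lt => //; first exact: fin_lt.
  by apply: unc; rewrite ler0n.
have [b [Xb Sb]] : exists b, X b /\ ~ (F `|` ball_d d a (n.+1%:R)) b.
  apply: contra_notP (proj2 SK) => h; apply: card_le_trans KX _.
  apply: subset_card_le => b Xb; apply: contra_notP h => Sb; exists b.
  by [].
exists (a, b); apply: (finish_pair AX Xa Xb) => //.
- by move=> Fb; apply: Sb; left.
- by move=> Bb; apply: Sb; right.
Qed.

Lemma negB K : infinite_card K -> regular_card K -> case_b K A -> unif_uncrowded K d ->
  exists2 g, stab A g & ~ bounded_d d g.
Proof.
move=> Kinf Kreg [Ablk nL] unc; apply: pairs_unbounded => F Ffin n.
have [Adne [Adis cov]] := Apart.
have [Ln LnK LnP] := unc (n.+1%:R)%R (ler0n _ _).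
have : forall x, exists M : set K, card_lt M [set: K] /\ forall X, A X -> X x -> X #<= M.
  move=> x; have : [set: Om] x by [].
  rewrite -cov => -[X AX Xx]; have [M MK XM] := rep_lt (Ablk _ AX).
  exists M; split => // Y AY Yx.
  by have -> : Y = X by apply: Adis => //; exists x.
move=> /choice[M MP].
pose L' := Ln `|` \bigcup_(x in F) M x.
have L'K : card_lt L' [set: K].
  apply: union2_lt => //; apply: union_set_lt => //; first exact: fin_lt.
  by move=> x _; case: (MP x).
have [X [AX nXL]] : exists X, A X /\ ~ (X #<= L').
  apply: contra_notP nL => h; exists L' => // X AX.
  by apply: contra_notP h => nX; exists X.
have XM x : X x -> F x -> False.
  move=> Xx Fx; apply: nXL; apply: card_le_trans (proj2 (MP x) _ AX Xx) _.
  by apply: subset_card_le => k Mk; right; exists x.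
have [a Xa] := Adne _ AX.
have [b [Xb nb]] : exists b, X b /\ ~ ball_d d a (n.+1%:R) b.
  apply: contra_notP nXL => h.
  have Xball : X `<=` ball_d d a (n.+1%:R)%R.
    by move=> b Xb; apply: contra_notP h => nb; exists b.
  apply: card_le_trans (subset_card_le Xball) _.
  apply: card_le_trans (LnP a) _.
  by apply: subset_card_le => k; left.
exists (a, b); apply: (finish_pair AX Xa Xb) => //.
- by move=> /(XM _ Xa).
- by move=> /(XM _ Xb).
Qed.

End Neg.

Section Main.
Variables (R : realType) (Om K : Type).
Hypothesis Kinf : infinite_card K.
Hypothesis Kreg : regular_card K.

Lemma blk_b (A : set (set Om)) : case_b K A -> forall X, A X -> card_lt X [set: K].
Proof. by case. Qed.

Lemma blk_c (A : set (set Om)) : case_c K A -> forall X, A X -> card_lt X [set: K].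
Proof. by move=> [L LK AL] X AX; apply: card_lt_le (AL _ AX) LK. Qed.

Lemma set0_ok : set0 `<=` @Sym Om /\ card_lt (@set0 (Om -> Om)) [set: K].
Proof. by split; [move=> f []|apply: fin_lt => //; apply: finite_set0]. Qed.

Lemma notpre (A B : set (set Om)) : is_partition A -> is_partition B ->
  ((case_a K B /\ (case_b K A \/ case_c K A)) \/ (case_b K B /\ case_c K A)) ->
  ~ preceq_k K (stab B) (stab A).
Proof.
move=> Apart Bpart cases [U [USym UK] sub].
have Ablk : forall X, A X -> card_lt X [set: K].
  by case: cases => [[_ [/blk_b|/blk_c]]|[_ /blk_c]].
have [dm unc bnd unif] := graph_good R Apart Kinf Kreg Ablk USym UK.
have Bb g : stab B g -> bounded_d (gdist R A U) g.
  move=> /sub /(gen_sub dm) [] // f [Af|Uf].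
    by split; [case: Af|apply: bnd; left].
  by split; [apply: USym|apply: bnd; right].
case: cases => [[Ba _]|[Bb' Ac]].
  by have [g Bg] := negA Bpart dm Kinf Kreg Ba unc; apply; apply: Bb.
by have [g Bg] := negB Bpart dm Kinf Kreg Bb' (unif Ac); apply; apply: Bb.
Qed.

End Main.

Unset Implicit Arguments.
Theorem theorem3p3 (R : realType) (Om K : Type) (A : set (set Om)) :
  infinite_set [set: Om] -> is_partition A ->
  infinite_card K -> regular_card K -> [set: K] #<= [set: Om] ->
  (* (a) *)
  (case_a K A ->
     ~ exists d : Om -> Om -> \bar R,
         [/\ gen_metric d, uncrowded K d & forall g, stab A g -> bounded_d d g]) /\
  (* (b) *)
  (case_b K A ->
     (exists d : Om -> Om -> \bar R,
         [/\ gen_metric d, uncrowded K d & forall g, stab A g -> bounded_d d g]) /\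
     ~ (exists d : Om -> Om -> \bar R,
         [/\ gen_metric d, unif_uncrowded K d & forall g, stab A g -> bounded_d d g])) /\
  (* (c) *)
  (case_c K A ->
     exists d : Om -> Om -> \bar R,
       [/\ gen_metric d, unif_uncrowded K d & forall g, stab A g -> bounded_d d g]) /\
  (* consequences *)
  (forall B : set (set Om), is_partition B ->
     ((case_a K A /\ case_b K B) \/ (case_a K A /\ case_c K B) \/
      (case_b K A /\ case_c K B) \/
      (case_a K B /\ case_b K A) \/ (case_a K B /\ case_c K A) \/
      (case_b K B /\ case_c K A)) ->
     ~ approx_k K (stab A) (stab B)) /\
  (forall B : set (set Om), is_partition B ->
     ((case_a K B /\ (case_b K A \/ case_c K A)) \/ (case_b K B /\ case_c K A)) ->
     ~ preceq_k K (stab B) (stab A)).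
Proof.
move=> _ Apart Kinf Kreg _.
have [s0 s0K] := @set0_ok Om K Kinf.
split.
  move=> Aa [d [dm unc bnd]].
  by have [g Ag] := negA Apart dm Kinf Kreg Aa unc; apply; apply: bnd.
split.
  move=> Ab; split.
    have [dm unc bnd _] := graph_good R Apart Kinf Kreg (blk_b Ab) s0 s0K.
    by exists (gdist R A set0); split => // g Ag; apply: bnd; left.
  move=> [d [dm unc bnd]].
  by have [g Ag] := negB Apart dm Kinf Kreg Ab unc; apply; apply: bnd.
split.
  move=> Ac.
  have [dm unc bnd unif] := graph_good R Apart Kinf Kreg (blk_c Ac) s0 s0K.
  by exists (gdist R A set0); split => //; [apply: unif|move=> g Ag; apply: bnd; left].
split; last by move=> B Bpart; apply: (notpre R Kinf Kreg Apart Bpart).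
move=> B Bpart cases [AB BA].
case: cases => [[Aa Bb]|[[Aa Bc]|[[Ab Bc]|[[Ba Ab]|[[Ba Ac]|[Bb Ac]]]]]].
- by apply: (notpre R Kinf Kreg Bpart Apart) AB; left; split => //; left.
- by apply: (notpre R Kinf Kreg Bpart Apart) AB; left; split => //; right.
- by apply: (notpre R Kinf Kreg Bpart Apart) AB; right.
- by apply: (notpre R Kinf Kreg Apart Bpart) BA; left; split => //; left.
- by apply: (notpre R Kinf Kreg Apart Bpart) BA; left; split => //; right.
- by apply: (notpre R Kinf Kreg Apart Bpart) BA; right.
Qed.
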